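(* Let $M$ be a $3$-connected matroid, let $\mathcal{T}$ be a tangle of $M$, and let $C,D$ be disjoint subsets of $E(M)$ such that $C\cup D$ is independent in the tangle matroid $M(\mathcal{T})$ and $M/C\setminus D$ is $3$-connected. Then for each $d\in D$, either $M/C\setminus(D\setminus d)$ is $3$-connected or there is an element $c\in C$ such that $M/(C\setminus c)\setminus(D\setminus d)$ is $3$-connected.
   Context: $\lambda_M(X) = \rank_M(X) + \rank_M(E(M)\setminus X) - \rank(M)$. A tangle of order $\theta$ of $M$ is a collection $\mathcal{T}$ of subsets of $E(M)$ such that: (i) $\lambda_M(X)<\theta$ for all $X\in\mathcal{T}$; (ii) for every $X\subseteq E(M)$ with $\lambda_M(X)<\theta$, either $X\in\mathcal{T}$ or $E(M)\setminus X\in\mathcal{T}$; (iii) if $X,Y,Z\in\mathcal{T}$ then $X\cup Y\cup Z\neq E(M)$; (iv) $E(M)\setminus\{e\}\notin\mathcal{T}$ for every $e\in E(M)$. The tangle matroid $M(\mathcal{T})$ has rank function $\rank_{\mathcal{T}}(X) = \min\{\lambda_M(Y): X\subseteq Y\in\mathcal{T}\}$ if some member of $\mathcal{T}$ contains $X$, and $\theta$ otherwise. *)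

(* Defs.v *)
(* Matroids given by a ground set E : {set T} (T a finType)
   and a rank function r : {set T} -> nat (only its values on subsets of E matter). *)
From mathcomp Require Import all_boot.
Set Implicit Arguments. Unset Strict Implicit. Unset Printing Implicit Defensive.

Section Matroids.
Variable T : finType.

Definition is_matroid (E : {set T}) (r : {set T} -> nat) : Prop :=
  [/\ (forall X : {set T}, X \subset E -> r X <= #|X|),
      (forall X Y : {set T}, X \subset Y -> Y \subset E -> r X <= r Y) &
      (forall X Y : {set T}, X \subset E -> Y \subset E ->
         r (X :|: Y) + r (X :&: Y) <= r X + r Y)].

Definition lambda (E : {set T}) (r : {set T} -> nat) (X : {set T}) : nat :=
  r X + r (E :\: X) - r E.

Definition k_separation (E : {set T}) (r : {set T} -> nat) (k : nat) (X : {set T}) :=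
  [/\ X \subset E, k <= #|X|, k <= #|E :\: X| & lambda E r X < k].

Definition three_connected (E : {set T}) (r : {set T} -> nat) : Prop :=
  forall k (X : {set T}), k < 3 -> ~ k_separation E r k X.

(* Minors: M / C \ D has ground set E - (C u D) and rank X |-> r(X u C) - r(C). *)
Definition minor_ground (E C D : {set T}) : {set T} := E :\: (C :|: D).
Definition contr_rank (r : {set T} -> nat) (C : {set T}) : {set T} -> nat :=
  fun X => r (X :|: C) - r C.

Definition is_tangle (E : {set T}) (r : {set T} -> nat) (theta : nat)
    (Tg : {set {set T}}) : Prop :=
  [/\ (forall X : {set T}, X \in Tg -> X \subset E /\ lambda E r X < theta),
      (forall X : {set T}, X \subset E -> lambda E r X < theta ->
          X \in Tg \/ E :\: X \in Tg),
      (forall X Y Z : {set T}, X \in Tg -> Y \in Tg -> Z \in Tg -> X :|: Y :|: Z != E) &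
      (forall e, e \in E -> E :\ e \notin Tg)].

Definition tangle_rank (E : {set T}) (r : {set T} -> nat) (theta : nat)
    (Tg : {set {set T}}) (X : {set T}) : nat :=
  if [exists Y in Tg, X \subset Y]
  then \big[minn/theta]_(Y in Tg | X \subset Y) lambda E r Y
  else theta.

Definition tangle_indep (E : {set T}) (r : {set T} -> nat) (theta : nat)
    (Tg : {set {set T}}) (X : {set T}) : Prop :=
  X \subset E /\ tangle_rank E r theta Tg X = #|X|.

End Matroids.

(* Main.v *)
Require Import Defs.
From mathcomp Require Import all_boot.
From Stdlib Require Import Classical Lia FunctionalExtensionality.
From mathcomp Require Import zify.
Set Implicit Arguments. Unset Strict Implicit. Unset Printing Implicit Defensive.


Ltac bdestr :=
  repeat match goal with
  | |- context [?z \in ?A] => case: (z \in A)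
  | |- context [?z == ?w] => case: (z == w)
  end.

Ltac hrw :=
  rewrite ?eqxx;
  repeat match goal with
  | H : is_true (?z \in ?A) |- context [?z \in ?A] => rewrite H
  | H : is_true (~~ (?z \in ?A)) |- context [?z \in ?A] => rewrite (negbTE H)
  | H : (?z \in ?A) = ?b |- context [?z \in ?A] => rewrite H
  | H : is_true (?z != ?w) |- context [?z == ?w] => rewrite (negbTE H)
  | H : is_true (?z != ?w) |- context [?w == ?z] => rewrite eq_sym (negbTE H)
  end.

Lemma sfact (T : finType) (A B : {set T}) : A \subset B -> forall y, (y \in A) ==> (y \in B).
Proof. by move=> h y; apply/implyP; apply: (subsetP h). Qed.

Ltac ssolve :=
  let y := fresh "y" in
  repeat (let h := fresh "hf" in intro h);
  try (match goal with |- (?b = true) => change (is_true b) end);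
  first [apply/subsetP => y | apply/setP => y];
  rewrite ?inE;
  repeat match goal with
   | H : forall _, is_true _ |- context [y] => move: (H y); clear H
   end;
  rewrite ?inE;
  repeat match goal with
   | |- context [y == ?z] => case: (y =P z) => [->|_]
   end;
  hrw; bdestr; try done.

Section Mat.
Variable T : finType.
Variables (E : {set T}) (r : {set T} -> nat).
Hypothesis hM : is_matroid E r.
Implicit Types X Y U I A : {set T}.

Lemma r_le X : X \subset E -> r X <= #|X|.
Proof. by case: hM => h _ _; apply: h. Qed.
Lemma r_mono X Y : X \subset Y -> Y \subset E -> r X <= r Y.
Proof. by case: hM => _ h _; apply: h. Qed.
Lemma r_sub X Y : X \subset E -> Y \subset E -> r (X :|: Y) + r (X :&: Y) <= r X + r Y.
Proof. by case: hM => _ _ h; apply: h. Qed.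
Lemma r0 : r set0 = 0.
Proof. by have := r_le (sub0set E); rewrite cards0; case: (r set0). Qed.

Lemma r_subm X Y U I : X \subset E -> Y \subset E -> U \subset X :|: Y ->
  I \subset X :&: Y -> r U + r I <= r X + r Y.
Proof.
move=> hX hY hU hI.
have h1 := r_sub hX hY.
have hXY : X :|: Y \subset E by rewrite subUset hX.
have h2 := r_mono hU hXY.
have h3 := r_mono hI (subset_trans (subsetIl X Y) hX).
lia.
Qed.

Lemma r_add X Y U : X \subset E -> Y \subset E -> U \subset X :|: Y -> r U <= r X + #|Y|.
Proof.
move=> hX hY hU.
have := r_subm hX hY hU (sub0set _). rewrite r0.
have := r_le hY. lia.
Qed.

Lemma lam_sym X : X \subset E -> lambda E r X = lambda E r (E :\: X).
Proof.
move=> hX; rewrite /lambda.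
have -> : E :\: (E :\: X) = X by rewrite setDDr setDv set0U; apply/setIidPr.
by rewrite addnC.
Qed.

Lemma lam_eq X : X \subset E -> lambda E r X + r E = r X + r (E :\: X).
Proof.
move=> hX; rewrite /lambda.
have : r E + r set0 <= r X + r (E :\: X).
  by apply: r_subm => //; [exact: subsetDl | apply/subsetP => y; rewrite !inE; case: (y \in X); case: (y \in E) | exact: sub0set].
rewrite r0; lia.
Qed.

Lemma lam_le X : X \subset E -> lambda E r X <= r X.
Proof.
move=> hX; rewrite /lambda.
have := r_mono (subsetDl E X) (subxx E). lia.
Qed.

Lemma lam_grow A U : A \subset E -> U \subset E ->
  lambda E r (A :|: U) <= lambda E r A + #|U|.
Proof.
move=> hA hU; rewrite /lambda.
have h1 := r_add hA hU (subxx _).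
have h2 : r (E :\: (A :|: U)) <= r (E :\: A).
  apply: r_mono; last exact: subsetDl.
  by apply: setDS; apply: subsetUl.
lia.
Qed.

End Mat.

Lemma tc_lam (T : finType) (E : {set T}) r k (X : {set T}) :
  three_connected E r -> X \subset E -> k < 3 -> k <= #|X| -> k <= #|E :\: X| ->
  k <= lambda E r X.
Proof.
move=> h hX hk h1 h2; rewrite leqNgt; apply/negP => hl.
by apply: (h k X hk); split.
Qed.


Lemma bigmin_le_seq (I : eqType) (s : seq I) (P : pred I) (F : I -> nat) m i0 :
  i0 \in s -> P i0 -> \big[minn/m]_(i <- s | P i) F i <= F i0.
Proof.
elim: s => //= x s IH; rewrite inE big_cons; case/orP => [/eqP<- ->|/IH h hP].
  exact: geq_minl.
case: (P x); last exact: h hP.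
exact: leq_trans (geq_minr _ _) (h hP).
Qed.

Lemma bigmin_le_m (I : eqType) (s : seq I) (P : pred I) (F : I -> nat) m :
  \big[minn/m]_(i <- s | P i) F i <= m.
Proof.
elim: s => /= [|x s IH]; first by rewrite big_nil.
rewrite big_cons; case: (P x) => //.
exact: leq_trans (geq_minr _ _) IH.
Qed.

Section Tangle.
Variable T : finType.
Variables (E : {set T}) (r : {set T} -> nat) (theta : nat) (Tg : {set {set T}}).
Hypothesis hM : is_matroid E r.
Hypothesis hT : is_tangle E r theta Tg.
Implicit Types X Y Z U A W : {set T}.

Lemma Tg_sub X : X \in Tg -> X \subset E.
Proof. by case: hT => h _ _ _ /h []. Qed.
Lemma Tg_lam X : X \in Tg -> lambda E r X < theta.
Proof. by case: hT => h _ _ _ /h []. Qed.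
Lemma Tg_ii X : X \subset E -> lambda E r X < theta -> X \in Tg \/ E :\: X \in Tg.
Proof. by case: hT => _ h _ _; apply: h. Qed.
Lemma Tcover X Y Z : X \in Tg -> Y \in Tg -> Z \in Tg -> E \subset X :|: Y :|: Z -> False.
Proof.
move=> hX hY hZ hE.
case: hT => _ _ h _; move/negP: (h X Y Z hX hY hZ); apply.
rewrite eqEsubset hE andbT !subUset.
by rewrite (Tg_sub hX) (Tg_sub hY) (Tg_sub hZ).
Qed.

Lemma lam_set0 : lambda E r set0 = 0.
Proof. by rewrite /lambda (r0 hM) setD0 add0n subnn. Qed.

Lemma lam_single x : x \in E -> lambda E r [set x] <= 1.
Proof.
move=> hx; have hs : [set x] \subset E by rewrite sub1set.
have := lam_le hM hs; have := r_le hM hs; rewrite cards1; lia.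
Qed.

Lemma Tsing x : x \in E -> lambda E r [set x] < theta -> [set x] \in Tg.
Proof.
move=> hx hl; have hs : [set x] \subset E by rewrite sub1set.
case: (Tg_ii hs hl) => // h.
by case: hT => _ _ _ /(_ x hx) /negP.
Qed.

Lemma Tsmall n : forall Z, #|Z| = n -> Z \subset E -> #|Z| < theta -> Z \in Tg.
Proof.
elim: n => [|n IH] Z hn hZ hlt.
  have ht : 0 < theta by rewrite hn in hlt.
  move/cards0_eq: hn => ->.
  have h0 : lambda E r set0 < theta by rewrite lam_set0.
  case: (Tg_ii (sub0set E) h0) => // h.
  exfalso; rewrite setD0 in h; apply: (Tcover h h h).
  by rewrite !setUid.
have : 0 < #|Z| by rewrite hn.
case/card_gt0P => x hx.
have hxE : x \in E by apply: (subsetP hZ).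
have hZ' : Z :\ x \subset E by apply: subset_trans (subsetDl _ _) hZ.
have hc : #|Z :\ x| = n by move: hn; rewrite (cardsD1 x) hx; case.
have h1 : Z :\ x \in Tg by apply: IH => //; rewrite hc; rewrite hn in hlt; lia.
have h2 : [set x] \in Tg.
  apply: Tsing => //; have := lam_single hxE; rewrite hn in hlt; lia.
have hl : lambda E r Z < theta.
  have := lam_le hM hZ; have := r_le hM hZ; lia.
case: (Tg_ii hZ hl) => // h.
exfalso; apply: (Tcover h h1 h2).
ssolve.
Qed.

Lemma Tsmall' Z : Z \subset E -> #|Z| < theta -> Z \in Tg.
Proof. exact: (@Tsmall #|Z|). Qed.

Lemma Tgrow A n : forall U, #|U| = n -> A \in Tg -> U \subset E ->
   lambda E r A + #|U| < theta -> A :|: U \in Tg.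
Proof.
elim: n => [|n IH] U hn hA hU hlt.
  by move/cards0_eq: hn => ->; rewrite setU0.
have : 0 < #|U| by rewrite hn.
case/card_gt0P => x hx.
have hxE : x \in E by apply: (subsetP hU).
have hU' : U :\ x \subset E by apply: subset_trans (subsetDl _ _) hU.
have hc : #|U :\ x| = n by move: hn; rewrite (cardsD1 x) hx; case.
have h1 : A :|: (U :\ x) \in Tg by apply: IH => //; rewrite hc; rewrite hn in hlt; lia.
have h2 : [set x] \in Tg.
  apply: Tsing => //; have := lam_single hxE; rewrite hn in hlt; lia.
have hAE := Tg_sub hA.
have hAU : A :|: U \subset E by rewrite subUset hAE.
have hl : lambda E r (A :|: U) < theta.
  have := lam_grow hM hAE hU; lia.
case: (Tg_ii hAU hl) => // h.
exfalso; apply: (Tcover h h1 h2).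
ssolve.
Qed.

Variable S : {set T}.
Hypothesis hI : tangle_indep E r theta Tg S.

Lemma IND1 : #|S| <= theta.
Proof.
case: hI => _; rewrite /tangle_rank; case: ifP => _ <- //.
exact: bigmin_le_m.
Qed.

Lemma IND2 Y : Y \in Tg -> S \subset Y -> #|S| <= lambda E r Y.
Proof.
move=> hY hSY.
case: hI => _; rewrite /tangle_rank; case: ifP => [_ <-|].
  apply: bigmin_le_seq; first by rewrite mem_index_enum.
  by rewrite hY hSY.
by move/existsP => h; exfalso; apply: h; exists Y; rewrite hY.
Qed.

Lemma F1 Z : Z \subset S -> #|Z| <= lambda E r Z.
Proof.
move=> hZS; rewrite leqNgt; apply/negP => hlt.
have hSE : S \subset E by case: hI.
have hZE : Z \subset E := subset_trans hZS hSE.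
have hcZS : #|Z| <= #|S| by apply: subset_leq_card.
have hth := IND1.
case: (Tg_ii hZE (leq_trans hlt (leq_trans hcZS hth))) => h.
  have hU : S :\: Z \subset E by apply: subset_trans (subsetDl _ _) hSE.
  have hcU : #|S :\: Z| = #|S| - #|Z|.
    by rewrite cardsD (setIidPr hZS).
  have hg : lambda E r Z + #|S :\: Z| < theta by lia.
  have h2 := Tgrow (erefl _) h hU hg.
  have hS2 : S \subset Z :|: (S :\: Z) by ssolve.
  have := IND2 h2 hS2.
  have := lam_grow hM hZE hU; lia.
have : 0 < #|Z| by lia.
case/card_gt0P => x hx.
have hxE : x \in E by apply: (subsetP hZE).
have h1 : Z :\ x \in Tg.
  apply: Tsmall'; first by apply: subset_trans (subsetDl _ _) hZE.
  move: hcZS; rewrite (cardsD1 x Z) hx; lia.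
have h2 : [set x] \in Tg.
  apply: Tsing => //.
  case: (ltnP 1 theta) => ht; first by have := lam_single hxE; lia.
  have hz1 : #|Z| = 1 by lia.
  have ht1 : 1 <= theta by lia.
  move/eqP/cards1P: hz1 => [y hy]; rewrite hy cards1 in hlt.
  move: hx; rewrite hy inE => /eqP ->; lia.
apply: (Tcover h h1 h2); ssolve.
Qed.

Lemma F2 W : W \subset E -> S \subset W -> #|W :\: S| <= 1 -> 3 <= theta ->
  #|S| <= lambda E r W.
Proof.
move=> hWE hSW hc ht; rewrite leqNgt; apply/negP => hlt.
have hSE : S \subset E by case: hI.
have hth := IND1.
case: (Tg_ii hWE (leq_trans hlt hth)) => h.
  by have := IND2 h hSW; lia.
have : 0 < #|S| by lia.
case/card_gt0P => x hx.
have hxE : x \in E by apply: (subsetP hSE).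
have h1 : S :\ x \in Tg.
  apply: Tsmall'; first by apply: subset_trans (subsetDl _ _) hSE.
  move: hth; rewrite (cardsD1 x S) hx; lia.
have h2 : (W :\: S) :|: [set x] \in Tg.
  apply: Tsmall'.
    by rewrite subUset sub1set hxE andbT; apply: subset_trans (subsetDl _ _) hWE.
  have := leq_card_setU (W :\: S) [set x]; rewrite cards1 => /leqifP.
  case: ifP => _; lia.
apply: (Tcover h h1 h2).
ssolve.
Qed.

Lemma Tcover1 Z x : Z \in Tg -> x \in E :\: Z -> #|E :\: Z| <= theta -> 2 <= theta -> False.
Proof.
move=> hZ hx hc ht.
have hxE : x \in E by move: hx; rewrite inE => /andP [].
have h1 : (E :\: Z) :\ x \in Tg.
  apply: Tsmall'; first by apply: subset_trans (subsetDl _ _) (subsetDl _ _).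
  move: hc; rewrite (cardsD1 x (E :\: Z)) hx; lia.
have h2 : [set x] \in Tg by apply: Tsmall'; rewrite ?sub1set ?cards1.
apply: (Tcover hZ h1 h2); ssolve.
Qed.

End Tangle.


Section Minor.
Variable T : finType.
Variables (E : {set T}) (r : {set T} -> nat) (theta : nat) (Tg : {set {set T}}) (C D : {set T}).
Hypothesis hM : is_matroid E r.
Hypothesis hT : is_tangle E r theta Tg.
Hypothesis hI : tangle_indep E r theta Tg (C :|: D).
Implicit Types X Y Z U A W : {set T}.

Lemma minor_bound (C' D' X : {set T}) : C' \subset E -> D' \subset E -> X \subset E :\: (C' :|: D') ->
  lambda E r (X :|: C' :|: D') <=
  lambda (E :\: (C' :|: D')) (contr_rank r C') X + #|C'| + #|D'|.
Proof.
move=> hC hD hX; rewrite /lambda /contr_rank.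
have e1 : E :\: (X :|: C' :|: D') = (E :\: (C' :|: D')) :\: X by move: (sfact hX); ssolve.
rewrite e1.
have hXE : X \subset E by apply: subset_trans hX (subsetDl _ _).
have hXC : X :|: C' \subset E by rewrite subUset hXE.
have hE'C : (E :\: (C' :|: D')) :|: C' \subset E by rewrite subUset subsetDl.
have hE'XC : ((E :\: (C' :|: D')) :\: X) :|: C' \subset E.
  by rewrite subUset hC andbT; apply: subset_trans (subsetDl _ _) (subsetDl _ _).
have h1 := r_add hM hXC hD (subxx (X :|: C' :|: D')).
have h2 := r_mono hM (subsetUl ((E :\: (C' :|: D')) :\: X) C') hE'XC.
have h3 := r_mono hM hE'C (subxx E).
have h4 := r_mono hM (subsetUr X C') hXC.
have h5 := r_mono hM (subsetUr ((E :\: (C' :|: D')) :\: X) C') hE'XC.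
have h6 := r_mono hM (subsetUr (E :\: (C' :|: D')) C') hE'C.
have h7 := r_le hM hC.
have h8 : r ((E :\: (C' :|: D')) :|: C') + r C' <= r (X :|: C') + r (((E :\: (C' :|: D')) :\: X) :|: C').
  by apply: (r_subm hM) => //; move: (sfact hX); ssolve.
lia.
Qed.

Lemma lamM_eq (C' E' X : {set T}) : C' \subset E -> E' \subset E -> X \subset E' ->
  lambda E' (contr_rank r C') X + r C' + r (E' :|: C') = r (X :|: C') + r ((E' :\: X) :|: C').
Proof.
move=> hC hE hX; rewrite /lambda /contr_rank.
have hXE : X \subset E by apply: subset_trans hX hE.
have hXC : X :|: C' \subset E by rewrite subUset hXE.
have hE'C : E' :|: C' \subset E by rewrite subUset hE.
have hE'XC : (E' :\: X) :|: C' \subset E.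
  by rewrite subUset hC andbT; apply: subset_trans (subsetDl _ _) hE.
have h4 := r_mono hM (subsetUr X C') hXC.
have h5 := r_mono hM (subsetUr (E' :\: X) C') hE'XC.
have h6 := r_mono hM (subsetUr E' C') hE'C.
have h8 : r (E' :|: C') + r C' <= r (X :|: C') + r ((E' :\: X) :|: C').
  by apply: (r_subm hM) => //; move: (sfact hX); ssolve.
lia.
Qed.

Lemma card_union3 (C' D' X : {set T}) : (forall y, ~~ ((y \in C') && (y \in D'))) ->
  X \subset E :\: (C' :|: D') -> #|X :|: C' :|: D'| = #|X| + #|C'| + #|D'|.
Proof.
move=> hdis hX.
have e1 : (X :|: C') :&: D' = set0 by move: (sfact hX); ssolve.
have e2 : X :&: C' = set0 by move: (sfact hX); ssolve.
by rewrite cardsU e1 cards0 subn0 cardsU e2 cards0 subn0.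
Qed.

Lemma minorF1 (C' D' X : {set T}) : C' \subset C :|: D -> D' \subset C :|: D ->
  (forall y, ~~ ((y \in C') && (y \in D'))) ->
  X \subset E :\: (C' :|: D') -> X \subset C :|: D ->
  #|X| <= lambda (E :\: (C' :|: D')) (contr_rank r C') X.
Proof.
move=> hC hD hdis hX hXS.
have hSE : C :|: D \subset E by case: hI.
have hW : X :|: C' :|: D' \subset C :|: D by rewrite !subUset hXS hC hD.
have := F1 hM hT hI hW.
have := minor_bound (subset_trans hC hSE) (subset_trans hD hSE) hX.
rewrite card_union3 //; lia.
Qed.

Lemma minorF2 (C' D' X : {set T}) : C' \subset C :|: D -> D' \subset C :|: D ->
  X \subset E :\: (C' :|: D') -> C :|: D \subset X :|: C' :|: D' ->
  #|X :\: (C :|: D)| <= 1 -> 3 <= theta ->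
  #|C :|: D| <= lambda (E :\: (C' :|: D')) (contr_rank r C') X + #|C'| + #|D'|.
Proof.
move=> hC hD hX hSW hc ht.
have hSE : C :|: D \subset E by case: hI.
have hXE : X \subset E by apply: subset_trans hX (subsetDl _ _).
have hWE : X :|: C' :|: D' \subset E.
  by rewrite !subUset hXE (subset_trans hC hSE) (subset_trans hD hSE).
have hc' : #|(X :|: C' :|: D') :\: (C :|: D)| <= 1.
  apply: leq_trans hc; apply: subset_leq_card; move: (sfact hC) (sfact hD); ssolve.
have := F2 hM hT hI hWE hSW hc' ht.
have := minor_bound (subset_trans hC hSE) (subset_trans hD hSE) hX.
lia.
Qed.

End Minor.


Section Main.
Variable T : finType.
Variables (E : {set T}) (r : {set T} -> nat) (theta : nat) (Tg : {set {set T}}) (C D : {set T}) (d : T).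
Hypothesis hM : is_matroid E r.
Hypothesis h3 : three_connected E r.
Hypothesis hT : is_tangle E r theta Tg.
Hypothesis hCE : C \subset E.
Hypothesis hDE : D \subset E.
Hypothesis hCD : forall y, ~~ ((y \in C) && (y \in D)).
Hypothesis hI : tangle_indep E r theta Tg (C :|: D).
Hypothesis hN : three_connected (E :\: (C :|: D)) (contr_rank r C).
Hypothesis hd : d \in D.
Implicit Types X Y Z U A W : {set T}.

Local Notation EN := (E :\: (C :|: D)).
Local Notation E1 := (E :\: (C :|: (D :\ d))).
Local Notation lam1 X := (lambda (E :\: (C :|: (D :\ d))) (contr_rank r C) X).
Local Notation lamN X := (lambda (E :\: (C :|: D)) (contr_rank r C) X).

Lemma hdE : d \in E. Proof. exact: (subsetP hDE). Qed.
Lemma hdC : d \notin C. Proof. by move: (hCD d); rewrite hd andbT. Qed.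
Lemma hdE1 : d \in E1. Proof. by rewrite !inE eqxx hdE (negbTE hdC). Qed.

Lemma stepA k X : X \subset E1 -> d \in X -> k < 3 -> k <= #|X| -> k <= #|E1 :\: X| ->
  lam1 X < k -> k = 2 /\ exists2 e, e \in EN & X = [set d; e].
Proof.
move=> hX hdX hk h1 h2 hl.
have hX'N : X :\ d \subset EN by move: (sfact hX); ssolve.
have eN : EN :\: (X :\ d) = E1 :\: X by move: (sfact hX); ssolve.
have hXE : X \subset E by apply: subset_trans hX (subsetDl _ _).
have hXC : X :|: C \subset E by rewrite subUset hXE.
have hX'C : (X :\ d) :|: C \subset E by rewrite subUset hCE andbT; apply: subset_trans (subsetDl _ _) hXE.
have hE1C : E1 :|: C \subset E by rewrite subUset hCE andbT subsetDl.
have hENC : EN :|: C \subset E by rewrite subUset hCE andbT subsetDl.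
have hE1XC : (E1 :\: X) :|: C \subset E.
  by rewrite subUset hCE andbT; apply: subset_trans (subsetDl _ _) (subsetDl _ _).
have hlN : lamN (X :\ d) <= lam1 X.
  have s1 : r (E1 :|: C) + r ((X :\ d) :|: C) <= r (X :|: C) + r (EN :|: C).
    by apply: (r_subm hM) => //; move: (sfact hX); ssolve.
  have q1 := lamM_eq hM hCE (subsetDl _ _) hX.
  have q2 := lamM_eq hM hCE (subsetDl E (C :|: D)) hX'N.
  rewrite eN in q2.
  clear -s1 q1 q2; lia.
have hcX : #|X| = (#|X :\ d|).+1 by rewrite (cardsD1 d X) hdX.
have hsmall : #|X :\ d| < k.
  rewrite ltnNge; apply/negP => hk'.
  have := tc_lam hN hX'N hk hk'; rewrite eN => /(_ h2).
  clear -hlN hl; lia.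
have hk1 : 1 <= k by move: hl; case: k {hk h1 h2 hsmall} => //.
case: (ltnP k 2) => hk2.
  have hk1' : k = 1 by clear -hk1 hk2; lia.
  subst k.
  have h0 : X :\ d = set0 by apply: cards0_eq; clear -hsmall; lia.
  have eX : X = [set d] by rewrite -(setD1K hdX) h0 setU0.
  rewrite eX in hl.
  have hDd : D :\ d \subset C :|: D by ssolve.
  have hdis : forall y, ~~ ((y \in C) && (y \in D :\ d)).
    by move=> y; move: (hCD y); rewrite !inE; case: (y \in C); case: (y \in D); rewrite ?andbF.
  have := minorF1 hM hT hI (subsetUl C D) hDd hdis.
  move=> /(_ [set d]); rewrite cards1.
  have hs1 : [set d] \subset E1 by rewrite sub1set hdE1.
  have hs2 : [set d] \subset C :|: D by rewrite sub1set inE hd orbT.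
  move=> /(_ hs1 hs2); clear -hl; lia.
have hk2' : k = 2 by clear -hk hk2; lia.
split => //.
have : #|X :\ d| == 1 by apply/eqP; clear -hsmall hk2' hcX h1; lia.
case/cards1P => e he.
exists e.
  by apply: (subsetP hX'N); rewrite he set11.
by rewrite -(setD1K hdX) he.
Qed.


Lemma getA : ~ three_connected E1 (contr_rank r C) ->
  exists2 e, e \in EN & (lam1 [set d; e] <= 1 /\ 2 <= #|E1 :\: [set d; e]|).
Proof.
move=> hn.
have [k [X [hk hks]]] : exists k X, k < 3 /\ k_separation E1 (contr_rank r C) k X.
  apply: NNPP => hne; apply: hn => k X hk hks; apply: hne; by exists k, X.
case: hks => hX h1 h2 hl.
wlog hdX : X hX h1 h2 hl / d \in X.
  move=> hw; case hdX: (d \in X); first exact: hw hX h1 h2 hl hdX.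
  have eX : E1 :\: (E1 :\: X) = X by move: (sfact hX); ssolve.
  apply: (hw (E1 :\: X)).
  - exact: subsetDl.
  - exact: h2.
  - by rewrite eX.
  - by rewrite -lam_sym.
  - by rewrite inE hdE1 hdX.
case: (stepA hX hdX hk h1 h2 hl) => hk2 [e he eX].
subst k; exists e => //; rewrite -eX; split => //; clear -hl; lia.
Qed.

Lemma stepA2 e : e \in EN -> lam1 [set d; e] <= 1 -> 2 <= #|E1 :\: [set d; e]| ->
  [/\ r ([set d] :|: C) = r C + 1, r ([set e] :|: C) = r C + 1,
      r ([set d; e] :|: C) = r C + 1 & r ((EN :\ e) :|: C) = r (E1 :|: C)].
Proof.
move=> he hl hc.
have hdE0 := hdE; have hdC0 := hdC.
have heE : e \in E by move: he; rewrite !inE => /andP [].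
have heC : e \notin C by move: he; rewrite !inE; case: (e \in C).
have heD : e \notin D by move: he; rewrite !inE; case: (e \in D); rewrite ?orbT.
have hde : d != e by apply/eqP => hde; move: heD; rewrite -hde hd.
have eY : E1 :\: [set d; e] = EN :\ e by ssolve.
have eEd : E1 :\: [set d] = EN by ssolve.
have hs : [set d] \subset E1 by rewrite sub1set hdE1.
have hs2 : [set d; e] \subset E1 by ssolve.
have hse : [set e] \subset EN by rewrite sub1set.
have c1 : 1 <= #|E1 :\: [set d]|.
  apply: leq_trans (subset_leq_card (_ : E1 :\: [set d; e] \subset _)); first by clear -hc; lia.
  ssolve.
have l1 : 1 <= lam1 [set d].
  rewrite leqNgt; apply/negP => hlt.
  have c0 : 1 <= #|[set d]| by rewrite cards1.
  by case: (@stepA 1 [set d] hs (set11 d) isT c0 c1 hlt).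
have c2 : 1 <= #|EN :\ e| by rewrite -eY; clear -hc; lia.
have c0 : 1 <= #|[set e]| by rewrite cards1.
have l2 : 1 <= lamN [set e] := tc_lam (k:=1) hN hse isT c0 c2.
have q1 := lamM_eq hM hCE (subsetDl _ _) hs; rewrite eEd in q1.
have q2 := lamM_eq hM hCE (subsetDl E (C :|: D)) hse.
have q3 := lamM_eq hM hCE (subsetDl _ _) hs2; rewrite eY in q3.
have hdE' : [set d] \subset E by rewrite sub1set hdE.
have heE' : [set e] \subset E by rewrite sub1set.
have hdeE : [set d; e] \subset E by apply: subset_trans hs2 (subsetDl _ _).
have hENC : EN :|: C \subset E by rewrite subUset hCE andbT subsetDl.
have hE1C : E1 :|: C \subset E by rewrite subUset hCE andbT subsetDl.
have hdeC : [set d; e] :|: C \subset E by rewrite subUset hCE andbT.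
have b1' : r ([set d] :|: C) <= r C + 1.
  by rewrite -(cards1 d); apply: (r_add hM hCE hdE'); ssolve.
have b2' : r ([set e] :|: C) <= r C + 1.
  by rewrite -(cards1 e); apply: (r_add hM hCE heE'); ssolve.
have b3 : r ((EN :\ e) :|: C) <= r (EN :|: C) by apply: (r_mono hM) => //; ssolve.
have b4 : r (EN :|: C) <= r (E1 :|: C) by apply: (r_mono hM) => //; ssolve.
have b5 : r ([set d] :|: C) <= r ([set d; e] :|: C) by apply: (r_mono hM) => //; ssolve.
clear -l1 l2 q1 q2 q3 b1' b2' b3 b4 b5 hl.
split; lia.
Qed.

Lemma cardY e : e \in EN -> 2 <= #|E1 :\: [set d; e]| -> 2 <= #|EN :\ e|.
Proof.
move=> he hc.
have heC : e \notin C by move: he; rewrite !inE; case: (e \in C).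
have heD : e \notin D by move: he; rewrite !inE; case: (e \in D); rewrite ?orbT.
have hde : d != e by apply/eqP => hde; move: heD; rewrite -hde hd.
have eY : E1 :\: [set d; e] = EN :\ e by ssolve.
by rewrite -eY.
Qed.

Lemma de_contra e : e \in EN -> 2 <= #|EN :\ e| -> r [set d; e] <= 1 -> False.
Proof.
move=> he hc hr.
have hdE0 := hdE; have hdC0 := hdC.
have heE : e \in E by move: he; rewrite !inE => /andP [].
have heD : e \notin D by move: he; rewrite !inE; case: (e \in D); rewrite ?orbT.
have hde : d != e by apply/eqP => hde; move: heD; rewrite -hde hd.
have hs : [set d; e] \subset E by ssolve.
have c1 : 2 <= #|[set d; e]| by rewrite cards2 hde.
have c2 : 2 <= #|E :\: [set d; e]|.
  apply: leq_trans hc _; apply: subset_leq_card; ssolve.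
have := tc_lam (k:=2) h3 hs isT c1 c2.
have := lam_le hM hs.
clear -hr; lia.
Qed.

Lemma cardS : #|C :|: D| = #|C| + #|D :\ d| + 1.
Proof.
have e1 : C :&: D = set0 by ssolve.
rewrite cardsU e1 cards0 subn0 (cardsD1 d D) hd; clear; lia.
Qed.

Lemma tight e : e \in EN -> r ([set d; e] :|: C) = r C + 1 -> 3 <= theta ->
  r C = #|C| /\ r (EN :\ e) = r E.
Proof.
move=> he hde1 ht.
have hdE0 := hdE; have hdC0 := hdC.
have heE : e \in E by move: he; rewrite !inE => /andP [].
have hW : C :|: D :|: [set e] \subset E by rewrite !subUset hCE hDE sub1set heE.
have hSW : C :|: D \subset C :|: D :|: [set e] by ssolve.
have hc : #|(C :|: D :|: [set e]) :\: (C :|: D)| <= 1.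
  rewrite -(cards1 e); apply: subset_leq_card; ssolve.
have h1 := F2 hM hT hI hW hSW hc ht.
have h2 := lam_eq hM hW.
have eW : E :\: (C :|: D :|: [set e]) = EN :\ e by ssolve.
rewrite eW in h2.
have hdeC : [set d; e] :|: C \subset E by rewrite subUset hCE andbT; ssolve.
have hD0 : D :\ d \subset E by apply: subset_trans (subsetDl _ _) hDE.
have h3' : r (C :|: D :|: [set e]) <= r ([set d; e] :|: C) + #|D :\ d|.
  by apply: (r_add hM) => //; ssolve.
have h4 : r (EN :\ e) <= r E by apply: (r_mono hM) => //; ssolve.
have h5 := r_le hM hCE.
have h6 := cardS.
clear -h1 h2 h3' h4 h5 h6 hde1; split; lia.
Qed.

Lemma choose_c e : e \in EN -> 2 <= #|EN :\ e| ->
  r ([set d; e] :|: C) = r C + 1 -> r C = #|C| ->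
  exists2 c, c \in C & #|C| + 1 <= r ((C :\ c) :|: [set d; e]).
Proof.
move=> he hc hde1 hrC.
have hdE0 := hdE; have hdC0 := hdC.
have heE : e \in E by move: he; rewrite !inE => /andP [].
apply: NNPP => hne.
have H : forall c, c \in C -> r ((C :\ c) :|: [set d; e]) <= #|C|.
  move=> c hcC; rewrite leqNgt; apply/negP => h; apply: hne; exists c => //.
  by rewrite addn1.
have hdeE : [set d; e] \subset E by ssolve.
have hCdeE : C :|: [set d; e] \subset E by rewrite subUset hCE.
have hCde : #|C| + 1 <= r (C :|: [set d; e]).
  rewrite -hrC -hde1; apply: (r_mono hM) => //; ssolve.
have key : forall n U, #|U| = n -> U \subset C ->
    r ((C :\: U) :|: [set d; e]) <= #|C :\: U| + 1.
  elim=> [|n IH] U hn hU.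
    move/cards0_eq: hn => ->; rewrite setD0.
    rewrite -hrC -hde1; apply: (r_mono hM) => //; first ssolve.
    by rewrite subUset hCE hdeE.
  have : 0 < #|U| by rewrite hn.
  case/card_gt0P => c hcU.
  have hcC : c \in C by apply: (subsetP hU).
  have hU' : U :\ c \subset C by apply: subset_trans (subsetDl _ _) hU.
  have hc' : #|U :\ c| = n by move: hn; rewrite (cardsD1 c U) hcU; case.
  have i1 := IH _ hc' hU'.
  have i2 := H c hcC.
  have hX : (C :\: (U :\ c)) :|: [set d; e] \subset E.
    by rewrite subUset hdeE andbT; apply: subset_trans (subsetDl _ _) hCE.
  have hY : (C :\ c) :|: [set d; e] \subset E.
    by rewrite subUset hdeE andbT; apply: subset_trans (subsetDl _ _) hCE.
  have s1 : r (C :|: [set d; e]) + r ((C :\: U) :|: [set d; e]) <=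
            r ((C :\: (U :\ c)) :|: [set d; e]) + r ((C :\ c) :|: [set d; e]).
    by apply: (r_subm hM) => //; move: (sfact hU); ssolve.
  have ec : (C :\: (U :\ c)) :\ c = C :\: U by ssolve.
  have hc2 : #|C :\: (U :\ c)| = #|C :\: U| + 1.
    rewrite (cardsD1 c (C :\: (U :\ c))) ec.
    have -> : c \in C :\: (U :\ c) by rewrite !inE eqxx hcC.
    by rewrite add1n addn1.
  clear -s1 i1 i2 hc2 hCde; lia.
have := key _ C (erefl _) (subxx C).
rewrite setDv set0U cards0.
exact: de_contra he hc.
Qed.

Lemma inEN x : x \in EN -> [/\ x \in E, x \notin C & x \notin D].
Proof.
rewrite !inE; case: (x \in E); case: (x \in C); case: (x \in D) => //.
Qed.

Section StepB.
Variables (e c : T).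
Hypothesis he : e \in EN.
Hypothesis hY2 : 2 <= #|EN :\ e|.
Hypothesis Fd : r ([set d] :|: C) = r C + 1.
Hypothesis Fe : r ([set e] :|: C) = r C + 1.
Hypothesis Fde : r ([set d; e] :|: C) = r C + 1.
Hypothesis hrC : r C = #|C|.
Hypothesis hrY : r (EN :\ e) = r E.
Hypothesis hcC : c \in C.
Hypothesis hKde : #|C| + 1 <= r ((C :\ c) :|: [set d; e]).
Hypothesis ht3 : 3 <= theta.

Local Notation K := (C :\ c).
Local Notation E2 := (E :\: ((C :\ c) :|: (D :\ d))).
Local Notation lam2 X := (lambda (E :\: ((C :\ c) :|: (D :\ d))) (contr_rank r (C :\ c)) X).

Lemma hcE : c \in E. Proof. exact: (subsetP hCE). Qed.
Lemma hcD : c \notin D. Proof. by move: (hCD c); rewrite hcC. Qed.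
Lemma hKE : K \subset E. Proof. exact: subset_trans (subsetDl _ _) hCE. Qed.
Lemma hE2E : E2 \subset E. Proof. exact: subsetDl. Qed.

Lemma hK : r K = #|K| /\ #|C| = #|K| + 1.
Proof.
have hcE' : [set c] \subset E by rewrite sub1set hcE.
have h1 : r C <= r K + #|[set c]| by apply: (r_add hM hKE hcE'); ssolve.
have h2 := r_le hM hKE.
have h3' : #|C| = #|K| + 1 by rewrite (cardsD1 c C) hcC add1n addn1.
rewrite cards1 in h1; split => //; clear -h1 h2 h3' hrC; lia.
Qed.

Lemma full Z : EN :\ e \subset Z -> Z \subset E -> r Z = r E.
Proof.
move=> h1 h2; have := r_mono hM h1 h2; have := r_mono hM h2 (subxx E).
rewrite hrY; clear; lia.
Qed.

Lemma Nfacts a : a \in EN -> r ([set a] :|: C) = r C + 1 /\ r ((EN :\ a) :|: C) = r E.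
Proof.
move=> ha.
have hsa : [set a] \subset EN by rewrite sub1set.
have hEN : #|EN| = (#|EN :\ e|).+1 by rewrite (cardsD1 e EN) he.
have c1 : 1 <= #|EN :\ a| by move: hEN; rewrite (cardsD1 a EN) ha; clear -hY2; lia.
have c0 : 1 <= #|[set a]| by rewrite cards1.
have l := tc_lam (k:=1) hN hsa isT c0 c1.
have q := lamM_eq hM hCE (subsetDl E (C :|: D)) hsa.
have haE : [set a] \subset E by apply: subset_trans hsa (subsetDl _ _).
have f1 : r (EN :|: C) = r E by apply: full; [ssolve | rewrite subUset hCE subsetDl].
have b1 : r ([set a] :|: C) <= r C + 1.
  by rewrite -(cards1 a); apply: (r_add hM hCE haE); ssolve.
have b2 : r ((EN :\ a) :|: C) <= r (EN :|: C).
  by apply: (r_mono hM); [ssolve | rewrite subUset hCE subsetDl].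
clear -l q f1 b1 b2; split; lia.
Qed.

Lemma lamN_le X : X \subset E2 -> lamN (X :&: EN) <= lam2 X.
Proof.
move=> hX.
have hdC0 := hdC; have hcD0 := hcD; have hcE0 := hcE.
have hAN : X :&: EN \subset EN by apply: subsetIr.
have q1 := lamM_eq hM hCE (subsetDl E (C :|: D)) hAN.
have q2 := lamM_eq hM hKE hE2E hX.
have eA : EN :\: (X :&: EN) = (EN :\: X) by ssolve.
rewrite eA in q1.
have f1 : r (EN :|: C) = r E by apply: full; [ssolve | rewrite subUset hCE subsetDl].
have f2 : r (E2 :|: K) = r E by apply: full; [ssolve | rewrite subUset hKE hE2E].
case: hK => hKr hKc.
have hXE : X \subset E by apply: subset_trans hX hE2E.
have hXK : X :|: K \subset E by rewrite subUset hXE hKE.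
have hE2XK : (E2 :\: X) :|: K \subset E by rewrite subUset hKE andbT; apply: subset_trans (subsetDl _ _) hE2E.
have hc1 : [set c] \subset E by rewrite sub1set.
case hcX : (c \in X).
  have b1 : r ((X :&: EN) :|: C) <= r (X :|: K) by apply: (r_mono hM) => //; ssolve.
  have b2 : r ((EN :\: X) :|: C) <= r ((E2 :\: X) :|: K) + #|[set c]|.
    by apply: (r_add hM) => //; ssolve.
  rewrite cards1 in b2.
  clear -q1 q2 f1 f2 b1 b2 hKr hKc hrC; lia.
have b1 : r ((X :&: EN) :|: C) <= r (X :|: K) + #|[set c]|.
  by apply: (r_add hM) => //; ssolve.
have b2 : r ((EN :\: X) :|: C) <= r ((E2 :\: X) :|: K) by apply: (r_mono hM) => //; ssolve.
rewrite cards1 in b1.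
clear -q1 q2 f1 f2 b1 b2 hKr hKc hrC; lia.
Qed.

Lemma stepB k X : X \subset E2 -> k < 3 -> k <= #|X| -> k <= #|E2 :\: X| -> lam2 X < k ->
  #|X :&: EN| < k -> False.
Proof.
move=> hX hk h1 h2 hl hA.
have hdC0 := hdC; have hcD0 := hcD; have hcE0 := hcE; have hdE0 := hdE.
case: (inEN he) => heE heC heD.
have hcd : c != d by apply/eqP => hcd; move: hdC0; rewrite -hcd hcC.
have hce : c != e by apply/eqP => hce; move: heC; rewrite -hce hcC.
have hde : d != e by apply/eqP => hde; move: heD; rewrite -hde hd.
case: hK => hKr hKc.
have hXE : X \subset E by apply: subset_trans hX hE2E.
have hKS : K \subset C :|: D by ssolve.
have hDS : D :\ d \subset C :|: D by ssolve.
have hD0E : D :\ d \subset E by apply: subset_trans (subsetDl _ _) hDE.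
have hdis : forall y, ~~ ((y \in K) && (y \in D :\ d)).
  by move=> y; move: (hCD y); rewrite !inE; bdestr.
have hs := cardS.
case: (posnP #|X :&: EN|) => hA0.
  have e0 : X :&: EN = set0 by apply: cards0_eq.
  have fA : forall y, ~~ ((y \in X) && (y \in EN)).
    move=> y; apply/negP => /andP [hy hy']; have : y \in X :&: EN by rewrite inE hy hy'.
    by rewrite e0 inE.
  have hXS : X \subset C :|: D by move: (sfact hX); ssolve.
  have := minorF1 hM hT hI hKS hDS hdis hX hXS.
  clear -hl h1; lia.
have hk2 : k = 2 by clear -hk hA hA0; lia.
subst k.
have : #|X :&: EN| == 1 by apply/eqP; clear -hA hA0; lia.
case/cards1P => a eA.
have haXN : a \in X :&: EN by rewrite eA set11.
have haX : a \in X by move: haXN; rewrite inE => /andP [].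
have haN : a \in EN by move: haXN; rewrite inE => /andP [].
case: (inEN haN) => haE haC haD.
have fa : forall y, ((y \in X) && (y \in EN)) ==> (y == a).
  move=> y; apply/implyP => hy; have : y \in X :&: EN by rewrite inE.
  by rewrite eA inE.
have hac : a != c by apply/eqP => hac; move: haC; rewrite hac hcC.
have had : a != d by apply/eqP => had; move: haD; rewrite had hd.
have q := lamM_eq hM hKE hE2E hX.
have hE2XK : (E2 :\: X) :|: K \subset E.
  by rewrite subUset hKE andbT; apply: subset_trans (subsetDl _ _) hE2E.
have hXK : X :|: K \subset E by rewrite subUset hXE hKE.
have f2 : r (E2 :|: K) = r E by apply: full; [ssolve | rewrite subUset hKE hE2E].
have m1 : r ((E2 :\: X) :|: K) <= r E by apply: (r_mono hM).
have hdeC : [set d; e] :|: C \subset E by rewrite subUset hCE andbT; ssolve.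
case: (Nfacts haN) => na1 na2.
case hcX : (c \in X); case hdX : (d \in X).
- have hSW : C :|: D \subset X :|: K :|: D :\ d by ssolve.
  have hc1 : #|X :\: (C :|: D)| <= 1.
    by rewrite -(cards1 a); apply: subset_leq_card; move: (sfact hX); ssolve.
  have := minorF2 hM hT hI hKS hDS hX hSW hc1 ht3.
  clear -hl hKc hs; lia.
- have b1 : r ([set a] :|: C) <= r (X :|: K) by apply: (r_mono hM) => //; ssolve.
  have b2 : r E <= r ((E2 :\: X) :|: K).
    case: (eqVneq a e) => hae.
      subst a.
      have hsub : EN :\ e \subset (E2 :\: X) :|: K by move: (sfact hX); ssolve.
      by rewrite (full hsub hE2XK).
    have hP1 : ((E2 :\: X) :|: K) :|: [set c] \subset E by rewrite subUset hE2XK sub1set.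
    have s1 : r (((E2 :\: X) :|: K) :|: [set c]) + r (K :|: [set d; e]) <=
              r ((E2 :\: X) :|: K) + r ([set d; e] :|: C).
      by apply: (r_subm hM) => //; move: (sfact hX); ssolve.
    have s2 : r ((EN :\ a) :|: C) <= r (((E2 :\: X) :|: K) :|: [set c]).
      by apply: (r_mono hM) => //; move: (sfact hX); ssolve.
    clear -s1 s2 hKde Fde hrC na2; lia.
  clear -q f2 m1 b1 b2 na1 hrC hKr hKc hl; lia.
- case: (eqVneq a e) => hae.
    subst a.
    have hsub : EN :\ e \subset (E2 :\: X) :|: K by move: (sfact hX); ssolve.
    have b2 := full hsub hE2XK.
    have b1 : r (K :|: [set d; e]) <= r (X :|: K) by apply: (r_mono hM) => //; ssolve.
    clear -q f2 b1 b2 hKde hrC hKr hKc hl; lia.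
  have hP1 : ((E2 :\: X) :|: K) :|: [set d] \subset E by rewrite subUset hE2XK sub1set.
  have s1 : r (((E2 :\: X) :|: K) :|: [set d]) + r ([set e] :|: C) <=
            r ((E2 :\: X) :|: K) + r ([set d; e] :|: C).
    by apply: (r_subm hM) => //; move: (sfact hX); ssolve.
  have s2 : r ((EN :\ a) :|: C) <= r (((E2 :\: X) :|: K) :|: [set d]).
    by apply: (r_mono hM) => //; move: (sfact hX); ssolve.
  have b2 : r E <= r ((E2 :\: X) :|: K) by clear -s1 s2 Fe Fde na2; lia.
  have hXK1 : r (X :|: K) <= #|C| by clear -q f2 b2 hKr hKc hl; lia.
  have haE' : [set a; d] \subset E by ssolve.
  have hKad : K :|: [set a; d] \subset E by rewrite subUset hKE.
  have b3 : r (K :|: [set a; d]) <= r (X :|: K) by apply: (r_mono hM) => //; ssolve.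
  have hc1 : [set c] \subset E by rewrite sub1set.
  have b4 : r ([set a; d] :|: C) <= r (K :|: [set a; d]) + #|[set c]|.
    by apply: (r_add hM) => //; ssolve.
  rewrite cards1 in b4.
  have hadC : [set a; d] :|: C \subset E by rewrite subUset hCE andbT.
  have s3 : r ([set a; e] :|: C) + r ([set d] :|: C) <= r ([set a; d] :|: C) + r ([set d; e] :|: C).
    by apply: (r_subm hM) => //; ssolve.
  have haeN : [set a; e] \subset EN by ssolve.
  have q3 := lamM_eq hM hCE (subsetDl E (C :|: D)) haeN.
  have f1 : r (EN :|: C) = r E by apply: full; [ssolve | rewrite subUset hCE subsetDl].
  have hENaeC : (EN :\: [set a; e]) :|: C \subset E.
    by rewrite subUset hCE andbT; apply: subset_trans (subsetDl _ _) (subsetDl _ _).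
  have m3 : r ((EN :\: [set a; e]) :|: C) <= r E by apply: (r_mono hM).
  have lN : lamN [set a; e] <= 1.
    clear -q3 f1 m3 s3 b3 b4 hXK1 Fd Fde hrC; lia.
  case: (leqP 2 #|EN :\: [set a; e]|) => hc2.
    have c0 : 2 <= #|[set a; e]| by rewrite cards2 hae.
    have := tc_lam (k:=2) hN haeN isT c0 hc2.
    clear -lN; lia.
  have hW0E : X :|: K :|: D :\ d \subset E by rewrite !subUset hXE hKE hD0E.
  have mb := minor_bound hM hKE hD0E hX.
  have hth := IND1 hI.
  have hlt : lambda E r (X :|: K :|: D :\ d) < theta.
    clear -mb hth hs hKc hl; lia.
  have eW : E :\: (X :|: K :|: D :\ d) = E2 :\: X by move: (sfact hX); ssolve.
  have hXad : X \subset [set a; d] by move: (sfact hX); ssolve.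
  have cX : #|X| <= 2.
    by apply: leq_trans (subset_leq_card hXad) _; rewrite cards2; case: (a != d).
  have u1 := cardsUI (X :|: K) (D :\ d).
  have u2 := cardsUI X K.
  have cW : #|X :|: K :|: D :\ d| <= theta.
    clear -u1 u2 cX hth hs hKc; lia.
  have hE2X : E2 :\: X \subset (EN :\: [set a; e]) :|: [set c; e].
    by move: (sfact hX); ssolve.
  have u3 := cardsUI (EN :\: [set a; e]) [set c; e].
  have c3 : #|[set c; e]| <= 2 by rewrite cards2; case: (c != e).
  have cE : #|E2 :\: X| <= 3.
    have := subset_leq_card hE2X; clear -u3 c3 hc2; lia.
  case: (Tg_ii hT hW0E hlt) => hTg.
    have hx : c \in E :\: (X :|: K :|: D :\ d) by rewrite eW !inE; hrw; bdestr.
    apply: (Tcover1 hM hT hTg hx); last by apply: leq_trans _ ht3.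
    by rewrite eW; clear -cE ht3; lia.
  have eWW : E :\: (E :\: (X :|: K :|: D :\ d)) = X :|: K :|: D :\ d by move: (sfact hW0E); ssolve.
  have hx : d \in E :\: (E :\: (X :|: K :|: D :\ d)) by rewrite eWW !inE hdX.
  apply: (Tcover1 hM hT hTg hx); last by apply: leq_trans _ ht3.
  by rewrite eWW.
- have hXa : X \subset [set a] by move: (sfact hX); ssolve.
  have := subset_leq_card hXa; rewrite cards1.
  clear -h1; lia.
Qed.

Lemma stepB_tc : three_connected E2 (contr_rank r K).
Proof.
move=> k X hk [hX h1 h2 hl].
have hAN : X :&: EN \subset EN by apply: subsetIr.
have hle := lamN_le hX.
have eA : EN :\: (X :&: EN) = (E2 :\: X) :&: EN by ssolve.
case: (ltnP #|X :&: EN| k) => hA.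
  exact: stepB hX hk h1 h2 hl hA.
case: (ltnP #|(E2 :\: X) :&: EN| k) => hB.
  have eX : E2 :\: (E2 :\: X) = X by move: (sfact hX); ssolve.
  have h1' : k <= #|E2 :\: (E2 :\: X)| by rewrite eX.
  have hl' : lam2 (E2 :\: X) < k by rewrite -lam_sym.
  exact: stepB (subsetDl _ _) hk h2 h1' hl' hB.
have hB' : k <= #|EN :\: (X :&: EN)| by rewrite eA.
have := tc_lam hN hAN hk hA hB'.
clear -hle hl; lia.
Qed.

End StepB.

Lemma main_res : three_connected E1 (contr_rank r C) \/
  exists2 c, c \in C & three_connected (E :\: ((C :\ c) :|: (D :\ d))) (contr_rank r (C :\ c)).
Proof.
case: (classic (three_connected E1 (contr_rank r C))) => [h|hn]; [by left | right].
case: (getA hn) => e he [hl hc].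
case: (stepA2 he hl hc) => Fd Fe Fde FY.
have hY2 := cardY he hc.
have hdE0 := hdE.
case: (inEN he) => heE heC heD.
have hdeE : [set d; e] \subset E by ssolve.
have hdeC : [set d; e] :|: C \subset E by rewrite subUset hdeE.
case: (posnP #|C|) => hC0.
  exfalso; apply: (de_contra he hY2).
  have := r_mono hM (subsetUl [set d; e] C) hdeC.
  have := r_le hM hCE.
  rewrite Fde; clear -hC0; lia.
have hs := cardS.
case: (leqP #|C :|: D| 2) => hs2.
  have : 0 < #|C| by [].
  case/card_gt0P => c0 hc0.
  have hC1 : C :\ c0 = set0.
    apply: cards0_eq; move: hs hs2 hC0; rewrite (cardsD1 c0 C) hc0; clear; lia.
  have hD1 : D :\ d = set0 by apply: cards0_eq; clear -hs hs2 hC0; lia.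
  exists c0 => //; rewrite hC1 hD1 setU0 setD0.
  have -> : contr_rank r set0 = r.
    by apply: functional_extensionality => X; rewrite /contr_rank setU0 (r0 hM) subn0.
  exact: h3.
have ht3 : 3 <= theta by apply: leq_trans (IND1 hI).
case: (tight he Fde ht3) => hrC hrY.
case: (choose_c he hY2 Fde hrC) => c hcC hKde.
exists c => //.
by apply: (stepB_tc he hY2 Fd Fe Fde hrC hrY hcC hKde ht3).
Qed.

End Main.


Theorem lemma4p2 (T : finType) (E : {set T}) (r : {set T} -> nat)
    (theta : nat) (Tg : {set {set T}}) (C D : {set T}) :
  is_matroid E r ->
  three_connected E r ->
  is_tangle E r theta Tg ->
  C \subset E -> D \subset E -> [disjoint C & D] ->
  tangle_indep E r theta Tg (C :|: D) ->
  three_connected (minor_ground E C D) (contr_rank r C) ->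
  forall d, d \in D ->
    three_connected (minor_ground E C (D :\ d)) (contr_rank r C) \/
    exists2 c, c \in C &
      three_connected (minor_ground E (C :\ c) (D :\ d)) (contr_rank r (C :\ c)).
Proof.
move=> hM h3 hT hCE hDE hCD hI hN d hd.
have hCD' : forall y, ~~ ((y \in C) && (y \in D)).
  by move=> y; apply/negP => /andP [h1 h2]; move: (disjointFr hCD h1); rewrite h2.
exact: (main_res hM h3 hT hCE hDE hCD' hI hN hd).
Qed.
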